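(* Let $G$ be a residually finite locally nilpotent group containing an element with finite centralizer. Then $G$ is finite. *)

(* Defs.v *)
From Stdlib Require Import List.
Import ListNotations.

Record Group := {
  carrier :> Type;
  gmul : carrier -> carrier -> carrier;
  gone : carrier;
  ginv : carrier -> carrier;
  gmulA : forall x y z, gmul x (gmul y z) = gmul (gmul x y) z;
  gmul1l : forall x, gmul gone x = x;
  gmul1r : forall x, gmul x gone = x;
  gmulVl : forall x, gmul (ginv x) x = gone;
  gmulVr : forall x, gmul x (ginv x) = gone
}.

Section GroupDefs.
Variable G : Group.

Definition is_subgroup (H : G -> Prop) : Prop :=
  H (gone G) /\ (forall x y, H x -> H y -> H (gmul G x y)) /\
  (forall x, H x -> H (ginv G x)).

Definition is_normal (N : G -> Prop) : Prop :=
  is_subgroup N /\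
  forall x g, N x -> N (gmul G (ginv G g) (gmul G x g)).

Definition finite_index (N : G -> Prop) : Prop :=
  exists reps : list G, forall x, exists g, In g reps /\ N (gmul G (ginv G g) x).

Definition residually_finite : Prop :=
  forall g : G, g <> gone G ->
    exists N, is_normal N /\ finite_index N /\ ~ N g.

Inductive gen (S : G -> Prop) : G -> Prop :=
| gen_base x : S x -> gen S x
| gen_one : gen S (gone G)
| gen_mul x y : gen S x -> gen S y -> gen S (gmul G x y)
| gen_inv x : gen S x -> gen S (ginv G x).

Definition comm (a b : G) : G :=
  gmul G (ginv G a) (gmul G (ginv G b) (gmul G a b)).

(* lower central series of a subgroup H: gamma_1 = H (index 0),
   gamma_{i+1} = [gamma_i, H] *)
Fixpoint lcs (H : G -> Prop) (n : nat) : G -> Prop :=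
  match n with
  | O => H
  | S m => gen (fun x => exists a b, lcs H m a /\ H b /\ x = comm a b)
  end.

Definition nilpotent_subgroup (H : G -> Prop) : Prop :=
  exists n, forall x, lcs H n x -> x = gone G.

Definition locally_nilpotent : Prop :=
  forall l : list G, nilpotent_subgroup (gen (fun x => In x l)).

Definition centralizer (g : G) : G -> Prop :=
  fun x => gmul G x g = gmul G g x.

Definition finite_set (P : G -> Prop) : Prop :=
  exists l : list G, forall x, P x -> In x l.

Definition finite_group : Prop := exists l : list G, forall x : G, In x l.

End GroupDefs.

(* Main.v *)
Require Import Defs.
From Stdlib Require Import List Classical.
Import ListNotations.

Section Aux.
Variable G : Group.
Notation "a * b" := (gmul G a b).
Notation "a ^-1" := (ginv G a) (at level 2).
Notation one := (gone G).

Lemma cancL a b : a * (a^-1 * b) = b.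
Proof. rewrite gmulA, gmulVr, gmul1l; reflexivity. Qed.
Lemma cancVL a b : a^-1 * (a * b) = b.
Proof. rewrite gmulA, gmulVl, gmul1l; reflexivity. Qed.

Ltac gnorm := repeat (rewrite <- ?gmulA); repeat (rewrite ?cancL, ?cancVL, ?gmulVl, ?gmulVr, ?gmul1l, ?gmul1r).

Lemma inv_uniq z w : z * w = one -> z = w^-1.
Proof. intro H. rewrite <- (gmul1r G z), <- (gmulVr G w), gmulA, H, gmul1l. reflexivity. Qed.

Lemma inv_mul a b : (a * b)^-1 = b^-1 * a^-1.
Proof. symmetry. apply inv_uniq. gnorm. reflexivity. Qed.

Lemma inv_one : one^-1 = one.
Proof. symmetry. apply inv_uniq. apply gmul1l. Qed.

Lemma solve1 g y : g^-1 * y = one -> y = g.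
Proof. intro H. rewrite <- (cancL g y), H, gmul1r. reflexivity. Qed.

Lemma choose_reps (A : Type) (P : A -> G -> Prop) (l : list A) :
  exists r : list G, forall a, In a l -> (exists y, P a y) -> exists y, In y r /\ P a y.
Proof.
  induction l as [|a l IH].
  - exists []. intros a' [].
  - destruct IH as [r Hr].
    destruct (classic (exists y, P a y)) as [[y Hy]|Hn].
    + exists (y :: r). intros a' [<-|Ha] Hex.
      * exists y. split; [left|]; auto.
      * destruct (Hr a' Ha Hex) as [y' [? ?]]. exists y'. split; [right|]; auto.
    + exists r. intros a' [<-|Ha] Hex.
      * contradiction.
      * apply Hr; auto.
Qed.

Lemma normal_inter N1 N2 : is_normal G N1 -> is_normal G N2 ->
  is_normal G (fun y => N1 y /\ N2 y).
Proof.
  intros [[a1 [b1 c1]] d1] [[a2 [b2 c2]] d2].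
  repeat split; intuition.
Qed.

Lemma findex_inter N1 N2 : is_normal G N1 -> is_normal G N2 ->
  finite_index G N1 -> finite_index G N2 -> finite_index G (fun y => N1 y /\ N2 y).
Proof.
  intros [[a1 [b1 c1]] d1] [[a2 [b2 c2]] d2] [r1 H1] [r2 H2].
  destruct (choose_reps (G*G) (fun p y => N1 ((fst p)^-1 * y) /\ N2 ((snd p)^-1 * y))
     (list_prod r1 r2)) as [r Hr].
  exists r. intro x.
  destruct (H1 x) as [g1 [I1 K1]]. destruct (H2 x) as [g2 [I2 K2]].
  destruct (Hr (g1, g2)) as [y [Iy [P1 P2]]].
  - apply in_prod; auto.
  - exists x. simpl. auto.
  - exists y. split; [exact Iy|]. simpl in *.
    assert (E : forall g, y^-1 * x = (g^-1 * y)^-1 * (g^-1 * x)).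
    { intro g. rewrite inv_mul. gnorm. reflexivity. }
    split.
    + rewrite (E g1). apply b1; auto.
    + rewrite (E g2). apply b2; auto.
Qed.


Lemma avoid_list (RF : residually_finite G) (L : list G) :
  exists N, is_normal G N /\ finite_index G N /\ forall c, In c L -> c <> one -> ~ N c.
Proof.
  induction L as [|c L IH].
  - exists (fun _ => True). repeat split; auto.
    + exists [one]. intro x. exists one. split; [left; auto|auto].
  - destruct IH as [N [HN [HF HA]]].
    destruct (classic (c = one)) as [E|E].
    + exists N. split; [auto|split; [auto|]]. intros c' [<-|Hc] Hne; [contradiction|auto].
    + destruct (RF c E) as [Nc [HNc [HFc Hc]]].
      exists (fun y => N y /\ Nc y). split; [apply normal_inter; auto|].
      split; [apply findex_inter; auto|].
      intros c' [<-|Hc'] Hne [X Y]; [contradiction|].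
      exact (HA c' Hc' Hne X).
Qed.

Fixpoint it (x : G) (k : nat) (n : G) : G :=
  match k with 0 => n | S k => it x k (comm G n x) end.

Lemma itS x k n : it x (S k) n = comm G (it x k n) x.
Proof. revert n; induction k; intro n; simpl; auto. rewrite <- IHk. reflexivity. Qed.

Lemma it_lcs x n k : lcs G (gen G (fun z => In z [n; x])) k (it x k n).
Proof.
  induction k.
  - simpl. apply gen_base. left; auto.
  - rewrite itS. simpl. apply gen_base. exists (it x k n), x. repeat split; auto.
    apply gen_base. right; left; auto.
Qed.

End Aux.
Ltac gnorm := repeat (rewrite <- ?gmulA); repeat (rewrite ?cancL, ?cancVL, ?gmulVl, ?gmulVr, ?gmul1l, ?gmul1r).

Theorem lemma2p4 (G : Group) :
  residually_finite G -> locally_nilpotent G ->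
  (exists g : G, finite_set G (centralizer G g)) ->
  finite_group G.
Proof.
  intros RF LN [x [l Hl]].
  destruct (avoid_list G RF l) as [N [[[N1 [NM NI]] NC] [[reps Hreps] HA]]].
  assert (Ncomm : forall n, N n -> N (comm G n x)).
  { intros n Hn. unfold comm. apply NM; auto. }
  assert (Ninj : forall n k, N n -> N k -> comm G n x = comm G k x -> n = k).
  { intros n k Hn Hk H.
    set (d := gmul G k (ginv G n)).
    assert (Hd : centralizer G x d).
    { unfold centralizer, d.
      pose proof (f_equal (fun z => gmul G x (gmul G k (gmul G z (gmul G (ginv G x) (gmul G (ginv G n) x))))) H) as E.
      unfold comm in E. simpl in E. gnorm. rewrite <- ?gmulA in E.
      repeat (rewrite ?cancL, ?cancVL, ?gmulVl, ?gmulVr, ?gmul1l, ?gmul1r in E).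
      symmetry; exact E. }
    destruct (classic (d = gone G)) as [E|E].
    - unfold d in E. symmetry.
      transitivity (gmul G (gmul G k (ginv G n)) n); [gnorm; reflexivity|].
      rewrite E, gmul1l. reflexivity.
    - exfalso. apply (HA d (Hl d Hd) E). unfold d. apply NM; auto. }
  assert (Htriv : forall k n, N n -> it G x k n = gone G -> n = gone G).
  { induction k as [|k IH]; intros n Hn H; simpl in H; auto.
    apply Ninj; auto. rewrite (IH _ (Ncomm n Hn) H). unfold comm.
    rewrite gmul1l, inv_one, gmul1l, gmulVl. reflexivity. }
  assert (Hall : forall n, N n -> n = gone G).
  { intros n Hn. destruct (LN [n; x]) as [k Hk].
    apply (Htriv k n Hn). apply Hk. apply it_lcs. }
  exists reps. intro y. destruct (Hreps y) as [g [Ig Ng]].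
  rewrite (solve1 G g y (Hall _ Ng)). exact Ig.
Qed.
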